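(* Let $E=E_+-E_-$ be a virtual complex, where $E_\pm$ are positive admissible complexes of Hilbert spaces, and assume $E$ is pseudofinite with $\det'(\Delta\,|\,E)=1$. Then the twist $E'$ is a pseudofinite virtual complex and $$\det{}'(\Delta\,|\,E')=\tau_1(E)^{-1}.$$
   Context: A positive complex of Hilbert spaces is $E_0\to E_1\to\cdots$ (zero in negative degrees); it is admissible if every Laplacian $\Delta_p=dd^*+d^*d|_{E_p}$ is admissible (restricted off its kernel): some negative power is trace class and its zeta function $\operatorname{tr}\Delta_p'^{-s}$ continues to a function holomorphic at $0$; $\det'(\Delta_p)=\exp(-\zeta'(0))$. For a virtual complex $E=E_+-E_-$ put $\det'(\Delta|E_k)=\det'(\Delta|(E_+)_k)/\det'(\Delta|(E_-)_k)$. $E$ is pseudofinite if there is $k_0$ with $\det'(\Delta|E_k)=1$ for all $k\ge k_0$; then $\det'(\Delta|E)=\prod_{k\ge0}\det'(\Delta|E_k)^{(-1)^k}$. The torsion is $\tau_1(E)=\prod_{p\ge0}\det'(\Delta|E_p)^{p(-1)^p}$. The twist is the virtual complex $E'=\sum_{k\ge0}(-1)^kE[-k]$, where $E[j]_k=E_{k+j}$; thus its degree-$j$ component is the virtual space $\sum_{k=0}^j(-1)^kE_{j-k}$ (with the direct-sum Laplacians), so $\det'(\Delta|E'_j)=\prod_{k=0}^{j}\det'(\Delta|E_{j-k})^{(-1)^k}$. *)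

(* Defs.v *)
From HB Require Import structures.
From mathcomp Require Import all_boot all_order all_algebra.
From mathcomp Require Import all_classical all_reals all_analysis.
Set Implicit Arguments. Unset Strict Implicit. Unset Printing Implicit Defensive.
Import Order.TTheory GRing.Theory Num.Theory.
Import numFieldNormedType.Exports.
Local Open Scope classical_set_scope.
Local Open Scope ring_scope.

Record adm_complex (R : realType) := AdmComplex {
  detLap : nat -> R ;
  detLap_gt0 : forall p, 0 < detLap p }.

Record virtual_complex (R : realType) := VirtualComplex {
  vplus : adm_complex R ;
  vminus : adm_complex R }.

Definition vdet (R : realType) (E : virtual_complex R) (k : nat) : R :=
  detLap (vplus E) k / detLap (vminus E) k.

Definition pseudofinite (R : realType) (d : nat -> R) : Prop :=
  exists k0 : nat, forall k, (k0 <= k)%N -> d k = 1.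

Definition infprod (R : realType) (f : nat -> R) : R :=
  lim ((fun n : nat => \prod_(k < n) f k) @ \oo).

Definition det_total (R : realType) (d : nat -> R) : R :=
  infprod (fun k => d k ^ ((-1) ^+ k : int)).

Definition tau1 (R : realType) (d : nat -> R) : R :=
  infprod (fun p => d p ^ ((p%:Z) * (-1) ^+ p)).

(* The twist E' = sum_k (-1)^k E[-k]: its degree-j determinant is
   prod_{k=0}^{j} det'(Delta|E_{j-k})^((-1)^k). *)
Definition twist_det (R : realType) (d : nat -> R) (j : nat) : R :=
  \prod_(k < j.+1) d (j - k)%N ^ ((-1) ^+ k : int).

(* Main.v *)
Require Import Defs.
From HB Require Import structures.
From mathcomp Require Import all_boot all_order all_algebra.
From mathcomp Require Import all_classical all_reals all_analysis.
Import Order.TTheory GRing.Theory Num.Theory.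
Local Open Scope ring_scope.

Section Aux.
Import numFieldNormedType.Exports.
Local Open Scope classical_set_scope.
Variable R : realType.

Lemma infprod_ev (f : nat -> R) k0 :
  (forall k, (k0 <= k)%N -> f k = 1) -> infprod f = \prod_(k < k0) f k.
Proof.
move=> H; rewrite /infprod; apply: lim_near_cst; first exact: norm_hausdorff.
exists k0 => // n /= Hn.
rewrite -(subnKC Hn) big_split_ord /= [X in _ * X]big1 ?mulr1 // => i _.
by apply: H; rewrite leq_addr.
Qed.

Lemma powsgn (x : R) k : x ^ ((-1) ^+ k : int) = if odd k then x^-1 else x.
Proof.
by rewrite -signr_odd; case: (odd k) => //=; rewrite expr1 exprN1.
Qed.

Definition P (d : nat -> R) n := \prod_(i < n) d i ^ ((-1) ^+ i : int).

Lemma lemA (d : nat -> R) j :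
  twist_det d j ^ ((-1) ^+ j : int) = P d j.+1.
Proof.
rewrite /twist_det /P (reindex_inj rev_ord_inj) /=.
rewrite powsgn; case oj: (odd j).
- rewrite -prodfV; apply: eq_bigr => i _; rewrite !powsgn.
  have hi : (i <= j)%N by rewrite -ltnS.
  rewrite subSS subKn // oddB // oj.
  by case: (odd i) => //=; rewrite invrK.
- apply: eq_bigr => i _; rewrite !powsgn.
  have hi : (i <= j)%N by rewrite -ltnS.
  by rewrite subSS subKn // oddB // oj.
Qed.

Lemma lemB (d : nat -> R) (hd : forall k, d k != 0) n :
  \prod_(j < n) twist_det d j ^ ((-1) ^+ j : int) *
  \prod_(p < n) d p ^ ((p%:Z) * (-1) ^+ p) = (P d n) ^+ n.
Proof.
elim: n => [|n IH]; first by rewrite !big_ord0 mulr1 expr0.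
rewrite !big_ord_recr /= lemA.
have -> : forall a b c e : R, a * b * (c * e) = (a * c) * (b * e).
  by move=> a b c e; rewrite -!mulrA [b * (c * e)]mulrCA.
rewrite IH /P big_ord_recr /= -/(P d n).
rewrite [(n%:Z * _)]mulrC -exprz_exp -exprnP exprMn !exprS.
by rewrite [P d n * P d n ^+ n]mulrC -!mulrA.
Qed.

End Aux.
Arguments P {R}. Arguments lemA {R}. Arguments lemB {R}. Arguments infprod_ev {R}. Arguments powsgn {R}.

Theorem proposition2p2p1 (R : realType) (E : virtual_complex R) :
  pseudofinite (vdet E) ->
  det_total (vdet E) = 1 ->
  pseudofinite (twist_det (vdet E)) /\
  det_total (twist_det (vdet E)) = (tau1 (vdet E))^-1.
Proof.
set d := vdet E.
move=> [k0 Hk0] Htot.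
have hd : forall k, d k != 0.
  by move=> k; rewrite /d /vdet mulf_neq0 ?invr_eq0 // gt_eqF // detLap_gt0.
have HP : P d k0 = 1.
  rewrite -Htot /det_total (infprod_ev _ k0) //.
  by move=> k hk; rewrite Hk0 // exp1rz.
have Hev : forall j, (k0 <= j)%N -> twist_det d j = 1.
  move=> j hj.
  have := lemA d j.
  have -> : P d j.+1 = 1.
    rewrite /P -(subnKC (leqW hj)) big_split_ord /= -/(P d k0) HP mul1r.
    by rewrite big1 // => i _; rewrite Hk0 ?exp1rz // leq_addr.
  rewrite powsgn; case: (odd j) => // /eqP; rewrite invr_eq1 => /eqP //.
split; first by exists k0.
rewrite /det_total /tau1 (infprod_ev _ k0); last first.
  by move=> k hk; rewrite Hev // exp1rz.
rewrite (infprod_ev _ k0); last first.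
  by move=> k hk; rewrite Hk0 // exp1rz.
have nz : \prod_(k < k0) d k ^ (k%:Z * (-1) ^+ k) != 0.
  rewrite prodf_seq_neq0; apply/allP => i _; exact: expfz_neq0.
apply: (mulIf nz); rewrite mulVf //.
by rewrite lemB // HP expr1n.
Qed.
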